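(* Let $n\in\mathbb{N}$ and let $\ell:[0,1]\to\mathbb{R}$ be convex and $L$-Lipschitz. There exists an online learning strategy that, when presented sequentially (possibly adversarially and adaptively) with channel test operators $E_{A,B}^{(t)}$, $t\in\{1,\dots,T\}$, and associated losses $\ell_t(\cdot)=\ell((\cdot)-b_t)$ with $b_t\in[0,1]$, outputs hypotheses $N_{A,B}^{(t)}\in\mathsf{PAULI}_n'$ such that for every $n$-qubit Pauli channel $\mathcal{P}$, \[ \sum_{t=1}^T \ell_t\big(\mathrm{Tr}[E_{A,B}^{(t)}N_{A,B}^{(t)}]\big) - \sum_{t=1}^T \ell_t\big(\mathrm{Tr}[E_{A,B}^{(t)}C_{A,B}^{\mathcal{P}}]\big) = \mathcal{O}(L\sqrt{nT}). \]
   Context: $A,B$ are $n$-qubit systems, $d=2^n$. Choi matrix: $C^{\mathcal{N}}_{A,B}=\sum_{i,j=0}^{d-1}|i\rangle\langle j|\otimes\mathcal{N}(|i\rangle\langle j|)$. A channel test operator is $E_{A,B}\geq0$ with $E_{A,B}\leq\sigma_A\otimes\mathbb{1}_B$ for some density operator $\sigma_A$. For $\vec z,\vec x\in\{0,1\}^n$ the Pauli operator is $P^{\vec z,\vec x}=\mathrm{i}^{\vec z\cdot\vec x}Z^{\vec z}X^{\vec x}$ (tensor products of single-qubit $Z^{z_i}$, $X^{x_i}$). An $n$-qubit Pauli channel is $\mathcal{P}(\rho)=\sum_{\vec z,\vec x}p_{\vec z,\vec x}P^{\vec z,\vec x}\rho P^{\vec z,\vec x\dagger}$ for a probability vector $(p_{\vec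 z,\vec x})$ on $\{0,1\}^n\times\{0,1\}^n$. $\mathsf{PAULI}_n'$ is the set of Choi matrices of $n$-qubit Pauli channels. In round $t$ the adversary presents $E^{(t)}$, the learner outputs $N^{(t)}$ (depending only on past information) and predicts $\mathrm{Tr}[E^{(t)}N^{(t)}]$, then $b_t$ is revealed. *)

(* Defs.v *)
From HB Require Import structures.
From mathcomp Require Import all_boot all_order all_algebra.
From mathcomp Require Import complex mxtens.
Set Implicit Arguments. Unset Strict Implicit. Unset Printing Implicit Defensive.
Import Order.TTheory GRing.Theory Num.Theory.
Local Open Scope ring_scope.

Section QDefs.
Variable R : rcfType.
Local Notation C := R[i].

Definition adjmx {m k} (A : 'M[C]_(m, k)) : 'M[C]_(k, m) :=
  (map_mx (fun c : C => (c^*)%C) A)^T.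

(* positive semidefinite: Hermitian and <v, A v> >= 0 for all v
   (the order on R[i] means "real and nonnegative") *)
Definition psd {m} (A : 'M[C]_m) : Prop :=
  A = adjmx A /\ forall v : 'cV[C]_m, 0 <= (adjmx v *m A *m v) 0 0.

Definition loewner_le {m} (A B : 'M[C]_m) : Prop := psd (B - A).

Definition density {m} (s : 'M[C]_m) : Prop := psd s /\ \tr s = 1.

Definition channel_test {d} (E : 'M[C]_(d * d)) : Prop :=
  psd E /\ exists sigma : 'M[C]_d, density sigma /\
    loewner_le E (sigma *t (1%:M : 'M[C]_d)).

Definition choi {d} (N : 'M[C]_d -> 'M[C]_d) : 'M[C]_(d * d) :=
  \sum_(i < d) \sum_(j < d) (delta_mx i j *t N (delta_mx i j)).

Definition pauliX : 'M[C]_2 := \matrix_(a < 2, b < 2) (if a == b then 0 else 1).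
Definition pauliZ : 'M[C]_2 :=
  \matrix_(a < 2, b < 2) (if a == b then (if a == 0 :> nat then 1 else -1) else 0).

Fixpoint ntens (F : bool -> 'M[C]_2) (n : nat) : n.-tuple bool -> 'M[C]_(2 ^ n) :=
  match n return n.-tuple bool -> 'M[C]_(2 ^ n) with
  | 0 => fun _ => 1%:M
  | n'.+1 => fun v =>
      castmx (esym (expnS 2 n'), esym (expnS 2 n'))
        (F (thead v) *t ntens F [tuple of behead v])
  end.

Definition Zpow {n} (z : n.-tuple bool) : 'M[C]_(2 ^ n) :=
  ntens (fun b => if b then pauliZ else 1%:M) z.
Definition Xpow {n} (x : n.-tuple bool) : 'M[C]_(2 ^ n) :=
  ntens (fun b => if b then pauliX else 1%:M) x.

Definition dotb {n} (z x : n.-tuple bool) : nat := \sum_(i < n) (tnth z i && tnth x i).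

Definition pauli {n} (z x : n.-tuple bool) : 'M[C]_(2 ^ n) :=
  ('i%C ^+ dotb z x) *: (Zpow z *m Xpow x).

Definition prob_vec {T : finType} (p : {ffun T -> R}) : Prop :=
  (forall t, 0 <= p t) /\ \sum_t p t = 1.

Definition pauli_channel {n} (p : {ffun (n.-tuple bool * n.-tuple bool) -> R})
  (rho : 'M[C]_(2 ^ n)) : 'M[C]_(2 ^ n) :=
  \sum_(zx : n.-tuple bool * n.-tuple bool)
     (p zx)%:C%C *: (pauli zx.1 zx.2 *m rho *m adjmx (pauli zx.1 zx.2)).

Definition in_PAULI' {n} (N : 'M[C]_(2 ^ n * 2 ^ n)) : Prop :=
  exists p, prob_vec p /\ N = choi (@pauli_channel n p).

(* online learner: maps the history of past rounds (E^(s), b_s), s < t,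
   to the hypothesis N^(t) *)
Definition history n := seq ('M[C]_(2 ^ n * 2 ^ n) * R).
Definition strategy n := history n -> 'M[C]_(2 ^ n * 2 ^ n).

Definition past n (E : nat -> 'M[C]_(2 ^ n * 2 ^ n)) (b : nat -> R) (t : nat)
  : history n := [seq (E s, b s) | s <- iota 0 t].

(* the prediction Tr[E N] (a real number for Hermitian E, N) *)
Definition pred_val {m} (E N : 'M[C]_m) : R := complex.Re (\tr (E *m N)).

Definition convex_on_pm1 (ell : R -> R) : Prop :=
  forall x y a, -1 <= x <= 1 -> -1 <= y <= 1 -> 0 <= a <= 1 ->
    ell (a * x + (1 - a) * y) <= a * ell x + (1 - a) * ell y.

Definition lipschitz_on_pm1 (L : R) (ell : R -> R) : Prop :=
  forall x y, -1 <= x <= 1 -> -1 <= y <= 1 -> `|ell x - ell y| <= L * `|x - y|.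

End QDefs.

(* Main.v *)
Require Import Defs.
From HB Require Import structures.
From mathcomp Require Import all_boot all_order all_algebra.
From mathcomp Require Import complex mxtens.
From mathcomp Require Import ring lra zify.
Import Order.TTheory GRing.Theory Num.Theory.
Local Open Scope ring_scope.
Set Implicit Arguments. Unset Strict Implicit. Unset Printing Implicit Defensive.


Section Q.
Variable R : rcfType.
Local Notation C := R[i].

Lemma adjmxE m k (A : 'M[C]_(m,k)) i j : adjmx A i j = ((A j i)^*)%C.
Proof. by rewrite /adjmx !mxE. Qed.

Lemma adjmxK m k (A : 'M[C]_(m,k)) : adjmx (adjmx A) = A.
Proof. by apply/matrixP=> i j; rewrite !mxE conjcK. Qed.

Lemma adjmx_mul m k l (A : 'M[C]_(m,k)) (B : 'M[C]_(k,l)) :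
  adjmx (A *m B) = adjmx B *m adjmx A.
Proof.
apply/matrixP=> i j; rewrite !mxE rmorph_sum; apply: eq_bigr => h _.
by rewrite !mxE rmorphM mulrC.
Qed.

Lemma adjmx_sum m k I (r : seq I) (P : pred I) (F : I -> 'M[C]_(m,k)) :
  adjmx (\sum_(i <- r | P i) F i) = \sum_(i <- r | P i) adjmx (F i).
Proof.
apply/matrixP=> a b; rewrite !mxE !summxE rmorph_sum.
by apply: eq_bigr => h _; rewrite !mxE.
Qed.

Lemma adjmxB m k (A B : 'M[C]_(m,k)) : adjmx (A - B) = adjmx A - adjmx B.
Proof. by apply/matrixP=> a b; rewrite !mxE rmorphB. Qed.

Lemma adjmxZ m k c (A : 'M[C]_(m,k)) : adjmx (c *: A) = (c^*)%C *: adjmx A.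
Proof. by apply/matrixP=> a b; rewrite !mxE rmorphM. Qed.

Lemma adjmx1 m : adjmx (1%:M : 'M[C]_m) = 1%:M.
Proof.
by apply/matrixP=> a b; rewrite !mxE rmorph_nat eq_sym.
Qed.

Lemma adjmx_tens m k p q (A : 'M[C]_(m,k)) (B : 'M[C]_(p,q)) :
  adjmx (A *t B) = adjmx A *t adjmx B.
Proof. by apply/matrixP=> a b; rewrite /adjmx !mxE rmorphM. Qed.

Lemma adjmx_cast m m' k k' (e1 : m = m') (e2 : k = k') (A : 'M[C]_(m,k)) :
  adjmx (castmx (e1, e2) A) = castmx (e2, e1) (adjmx A).
Proof. by case: _ / e1; case: _ / e2; rewrite !castmx_id. Qed.

Lemma castmx_mul2 m m' k k' l l' (e1 : m = m') (e2 : k = k') (e3 : l = l')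
  (A : 'M[C]_(m,k)) (B : 'M[C]_(k,l)) :
  castmx (e1, e2) A *m castmx (e2, e3) B = castmx (e1, e3) (A *m B).
Proof. by case: _ / e1; case: _ / e2; case: _ / e3; rewrite !castmx_id. Qed.

Lemma castmx_one m m' (e : m = m') :
  castmx (e, e) (1%:M : 'M[C]_m) = 1%:M.
Proof. by case: _ / e; rewrite castmx_id. Qed.

Lemma tens11 m k : (1%:M : 'M[C]_m) *t (1%:M : 'M[C]_k) = 1%:M.
Proof.
apply/matrixP=> a b.
case: (mxtens_indexP a) => a1 a2; case: (mxtens_indexP b) => b1 b2.
rewrite tensmxE !mxE -natrM mulnb; congr (_%:R); congr nat_of_bool.
apply/idP/idP.
  by case/andP=> /eqP-> /eqP->.
by move/eqP/(can_inj (@mxtens_indexK _ _)) => [-> ->]; rewrite !eqxx.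
Qed.

Definition unitary m (U : 'M[C]_m) := U *m adjmx U = 1%:M.

Lemma unitary_tens m k (A : 'M[C]_m) (B : 'M[C]_k) :
  unitary A -> unitary B -> unitary (A *t B).
Proof.
by rewrite /unitary => hA hB; rewrite adjmx_tens tensmx_mul hA hB tens11.
Qed.

Lemma unitary_cast m m' (e : m = m') (A : 'M[C]_m) :
  unitary A -> unitary (castmx (e, e) A).
Proof. by rewrite /unitary adjmx_cast castmx_mul2 => ->; rewrite castmx_one. Qed.

Lemma unitary1 m : unitary (1%:M : 'M[C]_m).
Proof. by rewrite /unitary adjmx1 mul1mx. Qed.

Lemma unitary_ntens F k (v : k.-tuple bool) :
  (forall b, unitary (F b)) -> unitary (ntens F v).
Proof.
move=> hF; elim: k v => [|k IH] v /=; first exact: unitary1.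
by apply: unitary_cast; apply: unitary_tens.
Qed.

Lemma sum2 (f : 'I_2 -> C) : \sum_(j < 2) f j = f 0 + f 1.
Proof. by rewrite big_ord_recl big_ord1; congr (f _ + f _); apply: val_inj. Qed.

Lemma unitaryZ : unitary (pauliZ R).
Proof.
apply/matrixP=> a b; rewrite /unitary /adjmx !mxE sum2 !mxE.
case: a => [[|[|a]] ha] //; case: b => [[|[|b]] hb] //=;
  rewrite ?rmorphN ?rmorph1 ?rmorph0 ?mulr1 ?mulr0 ?mul0r ?addr0 ?add0r ?mulrNN ?mulr1 //; simpc. all: by [].
Qed.

Lemma unitaryX : unitary (pauliX R).
Proof.
apply/matrixP=> a b; rewrite /unitary /adjmx !mxE sum2 !mxE.
case: a => [[|[|a]] ha] //; case: b => [[|[|b]] hb] //=;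
  rewrite ?rmorphN ?rmorph1 ?rmorph0 ?mulr1 ?mulr0 ?mul0r ?addr0 ?add0r ?mulrNN ?mulr1 //; simpc. all: by [].
Qed.

Lemma unitary_mul m (A B : 'M[C]_m) : unitary A -> unitary B -> unitary (A *m B).
Proof.
rewrite /unitary => hA hB; rewrite adjmx_mul mulmxA -(mulmxA A) hB mulmx1 //.
Qed.

Lemma conj_i : ((('i : C))^* )%C * 'i = 1.
Proof. by simpc. Qed.

Lemma unitary_pauli n (z x : n.-tuple bool) : unitary (pauli R z x).
Proof.
rewrite /unitary /pauli adjmxZ -scalemxAl -scalemxAr scalerA.
have -> : ('i%C ^+ dotb z x * ('i%C ^+ dotb z x)^*%C) = 1 :> C.
  by rewrite rmorphXn -exprMn mulrC conj_i expr1n.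
rewrite scale1r; apply: unitary_mul; apply: unitary_ntens => -[];
  [exact: unitaryZ|exact: unitary1|exact: unitaryX|exact: unitary1].
Qed.


Definition conjch m (P : 'M[C]_m) := fun rho : 'M[C]_m => P *m rho *m adjmx P.
Definition ev m (j : 'I_m) : 'cV[C]_m := delta_mx j 0.
Definition phi m : 'M[C]_(m * m, 1 * 1) := \sum_(j < m) (ev j *t ev j).

Lemma tensmx_sumr m k p q I (r : seq I) (P : pred I) (A : 'M[C]_(m,k))
   (F : I -> 'M[C]_(p,q)) :
  A *t (\sum_(i <- r | P i) F i) = \sum_(i <- r | P i) (A *t F i).
Proof.
apply/matrixP=> a b; rewrite !mxE !summxE mulr_sumr.
by apply: eq_bigr => i _; rewrite !mxE.
Qed.

Lemma tensmx_suml m k p q I (r : seq I) (P : pred I) (A : 'M[C]_(m,k))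
   (F : I -> 'M[C]_(p,q)) :
  (\sum_(i <- r | P i) F i) *t A = \sum_(i <- r | P i) (F i *t A).
Proof.
apply/matrixP=> a b; rewrite !mxE !summxE mulr_suml.
by apply: eq_bigr => i _; rewrite !mxE.
Qed.

Lemma tensmxZr m k p q c (A : 'M[C]_(m,k)) (B : 'M[C]_(p,q)) :
  A *t (c *: B) = c *: (A *t B).
Proof. by apply/matrixP=> a b; rewrite !mxE mulrCA. Qed.

Lemma adj_ev m (j : 'I_m) : adjmx (ev j) = delta_mx 0 j.
Proof. by apply/matrixP=> a b; rewrite /adjmx !mxE rmorph_nat andbC. Qed.

Lemma phi_phi m : phi m *m adjmx (phi m) =
   \sum_(j < m) \sum_(k < m) (delta_mx j k *t delta_mx j k).
Proof.
rewrite /phi adjmx_sum mulmx_suml; apply: eq_bigr => j _.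
rewrite mulmx_sumr; apply: eq_bigr => k _.
by rewrite adjmx_tens tensmx_mul adj_ev /ev mul_delta_mx.
Qed.

Lemma choi_conj m (P : 'M[C]_m) :
  choi (conjch P) =
  ((1%:M *t P) *m phi m) *m adjmx ((1%:M *t P) *m phi m).
Proof.
rewrite adjmx_mul mulmxA -(mulmxA _ (phi m)) phi_phi adjmx_tens adjmx1.
rewrite mulmx_sumr mulmx_suml; apply: eq_bigr => j _.
rewrite mulmx_sumr mulmx_suml; apply: eq_bigr => k _.
by rewrite !tensmx_mul mul1mx mulmx1.
Qed.

Lemma mxtrace_tens m k (A : 'M[C]_m) (B : 'M[C]_k) :
  \tr (A *t B) = \tr A * \tr B.
Proof. by rewrite /mxtrace mulr_sum; apply: eq_bigr => i _; rewrite !mxE. Qed.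

Lemma mxtrace_delta m (j k : 'I_m) : \tr (delta_mx j k : 'M[C]_m) = (j == k)%:R.
Proof.
rewrite /mxtrace (bigD1 j) //= big1 ?addr0; first by rewrite mxE eqxx.
by move=> i /negbTE hij; rewrite mxE hij.
Qed.

Lemma mxtrace_mul_delta m (A : 'M[C]_m) (j k : 'I_m) :
  \tr (A *m delta_mx j k) = A k j.
Proof.
rewrite /mxtrace (bigD1 k) //= big1 ?addr0.
  rewrite mxE (bigD1 j) //= big1 ?addr0; first by rewrite mxE !eqxx mulr1.
  by move=> i /negbTE hij; rewrite mxE hij mulr0.
move=> i /negbTE hik; rewrite mxE big1 // => l _.
by rewrite mxE hik andbF mulr0.
Qed.

Lemma form_tr m (v : 'cV[C]_m) (M : 'M[C]_m) :
  (adjmx v *m M *m v) 0 0 = \tr (M *m (v *m adjmx v)).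
Proof.
by rewrite mulmxA mxtrace_mulC -mulmxA mulmxA /mxtrace big_ord1.
Qed.

Lemma unitaryC m (P : 'M[C]_m) : unitary P -> adjmx P *m P = 1%:M.
Proof. by move=> h; apply: mulmx1C. Qed.

Lemma mxtrace_sum m I (r : seq I) (Pr : pred I) (F : I -> 'M[C]_m) :
  \tr (\sum_(i <- r | Pr i) F i) = \sum_(i <- r | Pr i) \tr (F i).
Proof. exact: (big_morph _ (@mxtraceD _ _) (@mxtrace0 _ _)). Qed.

Lemma tr_sigma_choi m (P : 'M[C]_m) (S : 'M[C]_m) : unitary P ->
  \tr ((S *t 1%:M) *m choi (conjch P)) = \tr S.
Proof.
move=> hP; rewrite /choi mulmx_sumr mxtrace_sum.
rewrite [X in _ = X]/mxtrace; apply: eq_bigr => j _.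
rewrite mulmx_sumr mxtrace_sum.
rewrite (bigD1 j) //= big1 ?addr0.
  rewrite tensmx_mul mxtrace_tens mxtrace_mul_delta mul1mx /conjch.
  by rewrite mxtrace_mulC mulmxA unitaryC // mul1mx mxtrace_delta eqxx mulr1.
move=> k /negbTE hjk.
rewrite tensmx_mul mxtrace_tens mxtrace_mul_delta mul1mx /conjch.
by rewrite mxtrace_mulC mulmxA unitaryC // mul1mx mxtrace_delta eq_sym hjk mulr0.
Qed.

Lemma a_bounds m (E : 'M[C]_(m * m)) (P : 'M[C]_m) :
  channel_test E -> unitary P ->
  0 <= pred_val E (choi (conjch P)) <= 1.
Proof.
move=> [[_ hE] [s [[_ trs] hl]]] hP.
set v : 'cV[C]_(m * m) := (1%:M *t P) *m phi m.
have hc : choi (conjch P) = v *m adjmx v by rewrite choi_conj.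
have h1 := hE v.
have h2 := (proj2 hl) v.
have h3 : (adjmx v *m (s *t 1%:M) *m v) 0 0 = 1.
  by rewrite form_tr -hc tr_sigma_choi.
move: h2; rewrite mulmxBr mulmxBl mxE h3 mxE subr_ge0 => h2.
rewrite /pred_val hc -form_tr.
move: h1 h2; set x := (adjmx v *m E *m v) 0 0.
by case: x => a b; rewrite !lecE /= => /andP[_ ->] /andP[_ ->].
Qed.

Lemma ReD (x y : C) : complex.Re (x + y) = complex.Re x + complex.Re y.
Proof. by case: x => a b; case: y. Qed.

Lemma Re0 : complex.Re (0 : C) = 0.
Proof. by []. Qed.

Lemma Re_sum I (r : seq I) (Pr : pred I) (F : I -> C) :
  complex.Re (\sum_(i <- r | Pr i) F i) = \sum_(i <- r | Pr i) complex.Re (F i).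
Proof. exact: (big_morph _ ReD Re0). Qed.

Lemma ReM_real (a : R) (z : C) : complex.Re (a%:C%C * z) = a * complex.Re z.
Proof. by case: z => x y /=; rewrite mul0r subr0. Qed.

Lemma pred_val_lin m (I : finType) (E : 'M[C]_m) (p : I -> R) (M : I -> 'M[C]_m) :
  pred_val E (\sum_i (p i)%:C%C *: M i) = \sum_i p i * pred_val E (M i).
Proof.
rewrite /pred_val mulmx_sumr mxtrace_sum Re_sum; apply: eq_bigr => i _.
by rewrite -scalemxAr mxtraceZ ReM_real.
Qed.

Lemma choi_lin n (p : {ffun (n.-tuple bool * n.-tuple bool) -> R}) :
  choi (pauli_channel p) = \sum_i (p i)%:C%C *: choi (conjch (pauli R i.1 i.2)).
Proof.
rewrite /choi /pauli_channel.
under [RHS]eq_bigr => i _ do rewrite scaler_sumr.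
rewrite [RHS]exchange_big; apply: eq_bigr => a _.
under [RHS]eq_bigr => i _ do rewrite scaler_sumr.
rewrite [RHS]exchange_big; apply: eq_bigr => b _.
rewrite tensmx_sumr; apply: eq_bigr => i _.
by rewrite tensmxZr.
Qed.

End Q.


Section Conv.
Variable R : rcfType.
Variables (ell : R -> R) (L : R).
Hypothesis hc : convex_on_pm1 ell.
Hypothesis hl : lipschitz_on_pm1 L ell.

Lemma conv3 a b c : -1 <= a -> a <= b -> b <= c -> c <= 1 ->
  (c - b) * (ell b - ell a) <= (b - a) * (ell c - ell b).
Proof.
move=> ha hab hbc hc1.
have [eac|lac] := eqVneq a c.
  have eb : b = a by apply/le_anti; rewrite hab andbT eac.
  by rewrite eb -eac !subrr !mulr0.
have hac : 0 < c - a.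
  by rewrite subr_gt0 lt_neqAle lac (le_trans hab hbc).
set al := (c - b) / (c - a).
have hal : 0 <= al <= 1.
  apply/andP; split; first by apply: divr_ge0; [rewrite subr_ge0 | exact: ltW].
  rewrite ler_pdivrMr //; lra.
have h := hc (x:=a) (y:=c) (a:=al).
have hb : al * a + (1 - al) * c = b.
  rewrite /al; field; by rewrite subr_eq0 eq_sym.
have := h; rewrite hb; move=> /(_ _ _ hal) h'.
have h1 : -1 <= a <= 1 by apply/andP; split=> //; lra.
have h2 : -1 <= c <= 1 by apply/andP; split=> //; lra.
have {h'} h' := h' h1 h2.
have e1 : al * (c - a) = c - b by rewrite /al; field; rewrite subr_eq0 eq_sym.
have : (c - a) * ell b <= (c - a) * (al * ell a + (1 - al) * ell c).
  by rewrite ler_pM2l.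
have -> : (c - a) * (al * ell a + (1 - al) * ell c)
   = (al * (c - a)) * ell a + ((c - a) - al * (c - a)) * ell c by ring.
rewrite e1 => h3.
nra.
Qed.

Lemma L_ge0 : 0 <= L.
Proof.
have h := hl (x:=1) (y:=-1).
have {h} h := h ltac:(lra) ltac:(lra).
have h2 : 0 <= L * `|1 - -1| by apply: le_trans (normr_ge0 _) h.
move: h2; rewrite opprK ger0_norm; last by lra.
move=> h2; nra.
Qed.

Definition slope (d x : R) :=
  if x + d <= 1 then (ell (x + d) - ell x) / d else (ell x - ell (x - d)) / d.

Lemma slope_bound d x : 0 < d <= 1 -> -1 <= x <= 1 -> `|slope d x| <= L.
Proof.
move=> /andP[d0 d1] /andP[x0 x1]; rewrite /slope.
case: ifP => hx.
  rewrite normrM normfV (gtr0_norm d0) ler_pdivrMr //.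
  have := hl (x:=x + d) (y:=x).
  have -> : x + d - x = d by ring.
  rewrite (gtr0_norm d0); apply; apply/andP; split; lra.
rewrite normrM normfV (gtr0_norm d0) ler_pdivrMr //.
have := hl (x:=x) (y:=x - d).
have -> : x - (x - d) = d by ring.
move/negbT: hx; rewrite -ltNge => hx.
rewrite (gtr0_norm d0); apply; apply/andP; split; lra.
Qed.

Lemma subgrad d x y : 0 < d <= 1 -> -1 <= x <= 1 -> -1 <= y <= 1 ->
  ell x - ell y <= slope d x * (x - y) + 2 * L * d.
Proof.
move=> hd hx hy.
have L0 := L_ge0.
have hs := slope_bound hd hx.
move: hd hx hy => /andP[d0 d1] /andP[x0 x1] /andP[y0 y1].
move: hs; rewrite /slope; case: ifP => hxd.
  set s := (ell (x + d) - ell x) / d => hs.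
  have es : s * d = ell (x + d) - ell x by rewrite /s divfK // gt_eqF.
  have [hs1 hs2] : -L <= s /\ s <= L.
    by move: hs; rewrite ler_norml => /andP[].
  have [yd|yd] := lerP (x + d) y.
    have := conv3 (a:=x) (b:=x+d) (c:=y) x0 _ yd y1.
    move=> /(_ _) h; have {h} h := h ltac:(lra).
    nra.
  have [xy|xy] := lerP x y.
    have := hl (x:=x) (y:=y); rewrite /= => /(_ _ _) h.
    have {h} h := h ltac:(lra) ltac:(lra).
    have ex : `|x - y| = y - x by rewrite distrC ger0_norm // subr_ge0.
    rewrite ex in h.
    have : `|ell x - ell y| <= L * d by apply: le_trans h _; nra.
    rewrite ler_norml => /andP[_ h']; nra.
  have := conv3 (a:=y) (b:=x) (c:=x+d) y0 (ltW xy) ltac:(lra) hxd.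
  nra.
move/negbT: hxd; rewrite -ltNge => hxd.
set s := (ell x - ell (x - d)) / d => hs.
have es : s * d = ell x - ell (x - d) by rewrite /s divfK // gt_eqF.
have [hs1 hs2] : -L <= s /\ s <= L.
  by move: hs; rewrite ler_norml => /andP[].
have [yd|yd] := lerP y (x - d).
  have := conv3 (a:=y) (b:=x-d) (c:=x) y0 yd ltac:(lra) x1.
  nra.
have [xy|xy] := lerP y x.
  have := hl (x:=x) (y:=y); rewrite /= => /(_ _ _) h.
  have {h} h := h ltac:(lra) ltac:(lra).
  have ex : `|x - y| = x - y by rewrite ger0_norm // subr_ge0.
  rewrite ex in h.
  have : `|ell x - ell y| <= L * d by apply: le_trans h _; nra.
  rewrite ler_norml => /andP[_ h']; nra.
have := conv3 (a:=x-d) (b:=x) (c:=y) ltac:(lra) ltac:(lra) (ltW xy) y1.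
nra.
Qed.

End Conv.


Section Elem.
Variable R : rcfType.

Lemma floor_ex (K : nat) (x : R) : 0 <= x <= K%:R ->
  exists j : nat, j%:R <= x < j%:R + 1.
Proof.
elim: K x => [|K IH] x /andP[x0 xK].
  by exists 0%N; rewrite add0r; apply/andP; split => //; lra.
have [xlt|xge] := ltrP x K%:R.
  by apply: IH; apply/andP; split => //; apply: ltW.
move: xK; rewrite -natr1 => xK.
have [xl|xg] := ltrP x (K%:R + 1).
  by exists K; apply/andP; split.
exists K.+1; rewrite -natr1; apply/andP; split; lra.
Qed.

Variable m : nat.
Hypothesis m4 : (4 <= m)%N.
Let a : R := m%:R^-1.
Let beta : R := 1 - a.

Lemma mR : 4 <= (m%:R : R).
Proof. by rewrite (ler_nat R 4 m). Qed.

Lemma a_pos : 0 < a.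
Proof. rewrite /a invr_gt0; have := mR; lra. Qed.

Lemma ma : m%:R * a = 1.
Proof. rewrite /a mulfV //; have := mR => h; rewrite gt_eqF //; lra. Qed.

Lemma a_le : a <= 1/4.
Proof.
have := mR => h; have := ma => h2; have := a_pos => h3.
nra.
Qed.

Lemma beta_ge0 : 0 <= beta.
Proof. rewrite /beta; have := a_le; lra. Qed.

Lemma beta_lt1 : beta < 1.
Proof. rewrite /beta; have := a_pos; lra. Qed.

Lemma bern_low (j : nat) : 1 - j%:R * a <= beta ^+ j.
Proof.
elim: j => [|j IH]; first by rewrite expr0 mul0r subr0.
rewrite exprS -natr1.
have hb := beta_ge0; have ha := a_pos.
have : beta * (1 - j%:R * a) <= beta * beta ^+ j by apply: ler_wpM2l.
rewrite /beta => h.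
have hj : 0 <= (j%:R : R) by apply: ler0n.
nra.
Qed.

Lemma bern_up (k : nat) : beta ^+ k <= 1 - k%:R * a + (k%:R * (k%:R - 1) / 2) * a ^+ 2.
Proof.
elim: k => [|k IH]; first by rewrite expr0; lra.
rewrite exprS -natr1.
have hb := beta_ge0; have ha := a_pos.
have : beta * beta ^+ k <= beta * (1 - k%:R * a + k%:R * (k%:R - 1) / 2 * a ^+ 2)
  by apply: ler_wpM2l.
rewrite /beta => h.
have hk : 0 <= (k%:R : R) by apply: ler0n.
have hk2 : 0 <= (k%:R : R) * (k%:R - 1) / 2 * a ^+ 3.
  case: k {IH h} hk => [|k] hk; first by rewrite mul0r !mul0r.
  apply: mulr_ge0; last by apply: exprn_ge0; lra.
  apply: mulr_ge0; last by lra.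
  apply: mulr_ge0 => //; rewrite -natr1; have := ler0n R k; lra.
nra.
Qed.

Lemma beta_m : beta ^+ m <= 1/2.
Proof.
have := bern_up m; have := ma => h1.
have -> : 1 - m%:R * a + m%:R * (m%:R - 1) / 2 * a ^+ 2 = (1 - a) / 2.
  rewrite expr2.
  have -> : m%:R * (m%:R - 1) / 2 * (a * a) = (m%:R * a) * (m%:R * a - a) / 2 by ring.
  rewrite h1; ring.
have := a_pos; lra.
Qed.

Lemma upper_j (y : R) : 0 <= y <= 1 ->
  exists j : nat, m%:R * y - 1 <= j%:R /\ 1 - y <= beta ^+ j.
Proof.
move=> /andP[y0 y1].
have hm := mR; have h1 := ma; have ha := a_pos.
have [j /andP[hj1 hj2]] : exists j : nat, j%:R <= m%:R * y < j%:R + 1.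
  apply: (@floor_ex m); apply/andP; split; nra.
exists j; split; first lra.
apply: le_trans (bern_low j).
have : j%:R * a <= m%:R * y * a by rewrite ler_pM2r.
have -> : m%:R * y * a = y * (m%:R * a) by ring.
rewrite h1; lra.
Qed.

Lemma lower_k (y : R) : 0 <= y <= 1/4 ->
  exists k : nat, k%:R <= m%:R * (y + y ^+ 2) + 1 /\ beta ^+ k <= 1 - y.
Proof.
move=> /andP[y0 y1].
have hm := mR; have h1 := ma; have ha := a_pos; have hal := a_le.
have [j /andP[hj1 hj2]] : exists j : nat, j%:R <= m%:R * (y + y ^+ 2) < j%:R + 1.
  apply: (@floor_ex m); apply/andP; split; rewrite expr2; nra.
exists j.+1; rewrite -natr1; split; first lra.
apply: le_trans (bern_up j.+1) _; rewrite -natr1.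
set k : R := j%:R + 1.
have hk1 : y + y ^+ 2 <= k * a.
  have : m%:R * (y + y ^+ 2) * a <= k * a by rewrite ler_pM2r //; apply: ltW.
  have -> : m%:R * (y + y ^+ 2) * a = (y + y ^+ 2) * (m%:R * a) by ring.
  by rewrite h1 mulr1.
have hk2 : k * a <= 1.
  have : k * a <= (m%:R * (y + y ^+ 2) + 1) * a by rewrite ler_pM2r //; rewrite /k; lra.
  have -> : (m%:R * (y + y ^+ 2) + 1) * a = (y + y ^+ 2) * (m%:R * a) + a by ring.
  rewrite h1 mulr1 expr2; nra.
have -> : 1 - k * a + k * (k - 1) / 2 * a ^+ 2 = 1 - (k * a) + (k * a) ^+ 2 / 2 - k * a ^+ 2 / 2.
  rewrite !expr2; ring.
have hk0 : 0 <= k * a ^+ 2 / 2.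
  apply: mulr_ge0; last by lra.
  apply: mulr_ge0; first by rewrite /k; have := ler0n R j; lra.
  by apply: exprn_ge0; lra.
set u := k * a in hk1 hk2 *.
move: hk1; rewrite expr2 => hk1.
have : u - u ^+ 2 / 2 >= y.
  set v := y + y * y in hk1.
  have e1 : u - u ^+ 2 / 2 - (v - v ^+ 2 / 2) = (u - v) * (1 - (u + v) / 2).
    by rewrite !expr2; ring.
  have e2 : v - v ^+ 2 / 2 - y = (y * y) * (1 - (1 + y) * (1 + y) / 2).
    by rewrite /v !expr2; ring.
  have f1 : 0 <= (u - v) * (1 - (u + v) / 2).
    apply: mulr_ge0; first by lra.
    have : v <= 1 by rewrite /v; nra.
    lra.
  have f2 : 0 <= (y * y) * (1 - (1 + y) * (1 + y) / 2).
    apply: mulr_ge0; first by nra.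
    have h1y : 1 + y <= 5/4 by lra.
    have h0y : 0 <= 1 + y by lra.
    have := ler_pM h0y h0y h1y h1y.
    have -> : (5/4 : R) * (5/4) = 25/16 by field.
    move=> h; set z := (1 + y) * (1 + y) in h *; lra.
  lra.
have e3 : u ^+ 2 = u * u by rewrite expr2.
lra.
Qed.

End Elem.

Section MW.
Variables (R : rcfType) (I : finType) (lam : R) (g : nat -> I -> R).

Fixpoint wt (t : nat) (i : I) : R :=
  if t is t'.+1 then wt t' i * (1 - lam * g t' i) else 1.
Definition Wt t := \sum_i wt t i.
Definition qv t i := wt t i / Wt t.
Definition mwl t := \sum_i qv t i * g t i.

Variable T : nat.
Hypothesis hlam : 0 <= lam <= 1/4.
Hypothesis hg : forall t, (t < T)%N -> forall i, 0 <= g t i <= 1.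
Variable i0 : I.

Lemma wt_pos t i : (t <= T)%N -> 0 < wt t i.
Proof.
elim: t => [|t IH] ht /=; first exact: ltr01.
apply: mulr_gt0; first by apply: IH; apply: ltnW.
have := hg ht i; move: hlam => /andP[l0 l1] /andP[g0 g1].
have : lam * g t i <= lam * 1 by apply: ler_wpM2l.
lra.
Qed.

Lemma Wt_pos t : (t <= T)%N -> 0 < Wt t.
Proof.
move=> ht; rewrite /Wt (bigD1 i0) //=; apply: ltr_pwDl; first exact: wt_pos.
by apply: sumr_ge0 => i _; apply: ltW; apply: wt_pos.
Qed.

Lemma qv_ge0 t i : (t <= T)%N -> 0 <= qv t i.
Proof. by move=> ht; rewrite /qv divr_ge0 // ltW ?wt_pos ?Wt_pos. Qed.

Lemma qv_sum t : (t <= T)%N -> \sum_i qv t i = 1.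
Proof.
move=> ht; rewrite /qv -mulr_suml divff //; rewrite gt_eqF //; exact: Wt_pos.
Qed.

Lemma lt_01 t : (t < T)%N -> 0 <= mwl t <= 1.
Proof.
move=> ht; have htl := ltnW ht.
apply/andP; split.
  apply: sumr_ge0 => i _; apply: mulr_ge0; first exact: qv_ge0.
  by case/andP: (hg ht i).
rewrite -(qv_sum htl); apply: ler_sum => i _.
have := qv_ge0 i htl; case/andP: (hg ht i) => _ h1 h2.
by rewrite -[X in _ <= X]mulr1 ler_wpM2l.
Qed.

Lemma Wt_step t : (t <= T)%N -> Wt t.+1 = Wt t * (1 - lam * mwl t).
Proof.
move=> ht; have hW := Wt_pos ht; rewrite /mwl /qv /Wt /= in hW *.
rewrite mulrBr mulr1 mulr_sumr mulr_sumr -sumrB; apply: eq_bigr => i _.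
field; by rewrite gt_eqF.
Qed.

Lemma mw_regret (m r : nat) (i : I) : (4 <= m)%N ->
  (#|I|%:R : R) * (1 - m%:R^-1) ^+ r <= 1 ->
  m%:R * lam * \sum_(t < T) mwl t <=
  m%:R * lam * \sum_(t < T) g t i + m%:R * lam ^+ 2 * T%:R + 2 * T%:R + r%:R.
Proof.
move=> m4 hN.
set beta : R := 1 - m%:R^-1.
have hm := @mR R m m4.
have b0 : 0 < beta.
  have := @a_le R m m4; rewrite /beta; lra.
have b1 : beta < 1 by apply: (@beta_lt1 R m m4).
move: hlam => /andP[l0 l1].
have claim : forall t, (t <= T)%N -> exists J K : nat,
   [/\ m%:R * lam * \sum_(s < t) mwl s - t%:R <= J%:R,
       K%:R <= m%:R * lam * \sum_(s < t) g s i + m%:R * lam ^+ 2 * t%:R + t%:R,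
       Wt t <= #|I|%:R * beta ^+ J & beta ^+ K <= wt t i].
  elim=> [|t IH] ht.
    exists 0%N, 0%N; rewrite !big_ord0 !mulr0 !expr0 subr0 !addr0 mulr1.
    split => //.
    by rewrite /Wt /= sumr_const.
  have htl : (t <= T)%N by apply: ltnW.
  have [J [K [h1 h2 h3 h4]]] := IH htl.
  have [lt0 lt1] : 0 <= mwl t /\ mwl t <= 1 by apply/andP; apply: lt_01.
  have [g0 g1] : 0 <= g t i /\ g t i <= 1 by apply/andP; apply: hg.
  have hy1 : 0 <= lam * mwl t <= 1.
    apply/andP; split; first by apply: mulr_ge0.
    have : lam * mwl t <= lam * 1 by apply: ler_wpM2l.
    lra.
  have hy2 : 0 <= lam * g t i <= 1/4.
    apply/andP; split; first by apply: mulr_ge0.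
    have : lam * g t i <= lam * 1 by apply: ler_wpM2l.
    lra.
  have [j [hj1 hj2]] := upper_j m4 hy1.
  have [k [hk1 hk2]] := lower_k m4 hy2.
  exists (J + j)%N, (K + k)%N.
  rewrite !big_ord_recr /= !natrD; split.
  - lra.
  - have : m%:R * (lam * g t i) ^+ 2 <= m%:R * lam ^+ 2.
      apply: ler_wpM2l; first by lra.
      rewrite exprMn -[X in _ <= X]mulr1; apply: ler_wpM2l; first by apply: sqr_ge0.
      rewrite expr2 -[X in _ <= X]mulr1; apply: ler_pM => //.
    move=> hh.
    have e : m%:R * (lam * g t i + (lam * g t i) ^+ 2) + 1 =
      m%:R * lam * g t i + m%:R * (lam * g t i) ^+ 2 + 1 by ring.
    rewrite e in hk1.
    have e2 : m%:R * lam * (\sum_(i0 < t) g i0 i + g t i) + m%:R * lam ^+ 2 * (t%:R + 1)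
      + (t%:R + 1) = (m%:R * lam * \sum_(i0 < t) g i0 i + m%:R * lam ^+ 2 * t%:R + t%:R)
      + (m%:R * lam * g t i + m%:R * lam ^+ 2 + 1) by ring.
    rewrite -natr1 e2; lra.
  - rewrite (Wt_step htl) exprD mulrA.
    apply: ler_pM => //; first by apply: ltW; apply: Wt_pos.
    by case/andP: hy1 => _ ?; lra.
  - rewrite /= exprD; apply: ler_pM => //; try by apply: exprn_ge0; apply: ltW.
have [J [K [h1 h2 h3 h4]]] := claim T (leqnn T).
have hJK : (J <= K + r)%N.
  rewrite -(ler_iXn2l b0 b1) exprD.
  have hWi : wt T i <= Wt T.
    rewrite /Wt (bigD1 i) //= lerDl; apply: sumr_ge0 => ? _.
    by apply: ltW; apply: wt_pos.
  have : beta ^+ K <= #|I|%:R * beta ^+ J by lra.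
  move=> hh.
  have hr0 : 0 <= beta ^+ r by apply: exprn_ge0; apply: ltW.
  have := ler_wpM2r hr0 hh.
  have -> : #|I|%:R * beta ^+ J * beta ^+ r = (#|I|%:R * beta ^+ r) * beta ^+ J by ring.
  move=> hh2; apply: le_trans hh2 _.
  rewrite -[X in _ <= X]mul1r; apply: ler_wpM2r => //.
  by apply: exprn_ge0; apply: ltW.
have : (J%:R : R) <= K%:R + r%:R by rewrite -natrD ler_nat.
lra.
Qed.

End MW.


Section Strat.
Variables (R : rcfType) (n : nat) (ell : R -> R) (L lam del : R).
Local Notation I := (n.-tuple bool * n.-tuple bool)%type.
Local Notation MM := 'M[R[i]]_(2 ^ n * 2 ^ n).

Definition aa (E : MM) (i : I) : R :=
  pred_val E (choi (conjch (pauli R i.1 i.2))).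
Definition nrm (w : {ffun I -> R}) : {ffun I -> R} :=
  [ffun i => w i / \sum_j w j].
Definition clamp (x : R) : R := if x < 0 then 0 else if 1 < x then 1 else x.
Definition gg (E : MM) (b : R) (w : {ffun I -> R}) (i : I) : R :=
  clamp ((slope ell del (\sum_j nrm w j * aa E j - b) * aa E i + L) / (2 * L)).
Definition stp (w : {ffun I -> R}) (Eb : MM * R) : {ffun I -> R} :=
  [ffun i => w i * (1 - lam * gg Eb.1 Eb.2 w i)].
Definition wts (h : history R n) : {ffun I -> R} := foldl stp [ffun _ => 1] h.
Definition strat_mw (h : history R n) : MM := choi (pauli_channel (nrm (wts h))).

Lemma clamp_01 x : 0 <= clamp x <= 1.
Proof.
rewrite /clamp; case: ifP => h0; first by rewrite lexx ler01.
case: ifP => h1; first by rewrite ler01 lexx.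
by move/negbT: h0; move/negbT: h1; rewrite -!leNgt => -> ->.
Qed.

Lemma clamp_id x : 0 <= x <= 1 -> clamp x = x.
Proof.
move=> /andP[h0 h1]; rewrite /clamp ltNge h0 /= ltNge h1 //.
Qed.

Hypothesis hlam : 0 <= lam <= 1/4.

Lemma stp_pos (w : {ffun I -> R}) Eb : (forall i, 0 < w i) -> forall i, 0 < stp w Eb i.
Proof.
move=> hw i; rewrite ffunE; apply: mulr_gt0 => //.
have := clamp_01 ((slope ell del (\sum_j nrm w j * aa Eb.1 j - Eb.2) * aa Eb.1 i + L) / (2 * L)).
rewrite /gg; set c := clamp _ => /andP[c0 c1].
move: hlam => /andP[l0 l1].
have : lam * c <= lam * 1 by apply: ler_wpM2l.
lra.
Qed.

Lemma wts_pos h i : 0 < wts h i.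
Proof.
rewrite /wts.
have : forall i, 0 < ([ffun _ => 1] : {ffun I -> R}) i by move=> j; rewrite ffunE ltr01.
elim: h [ffun _ => 1] => [|Eb h IH] w hw /=; first exact: hw.
by apply: IH; apply: stp_pos.
Qed.

Definition i0 : I := ([tuple of nseq n false], [tuple of nseq n false]).

Lemma nrm_prob (w : {ffun I -> R}) : (forall i, 0 < w i) -> prob_vec (nrm w).
Proof.
move=> hw.
have hs : 0 < \sum_j w j.
  rewrite (bigD1 i0) //=; apply: ltr_pwDl => //.
  by apply: sumr_ge0 => j _; apply: ltW.
split.
  by move=> t; rewrite ffunE divr_ge0 // ltW.
under eq_bigr => t _ do rewrite ffunE.
by rewrite -mulr_suml divff // gt_eqF.
Qed.

Lemma strat_pauli h : in_PAULI' (strat_mw h).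
Proof.
exists (nrm (wts h)); split => //.
by apply: nrm_prob => i; apply: wts_pos.
Qed.


Lemma pv_lin (E : MM) (p : {ffun I -> R}) :
  pred_val E (choi (pauli_channel p)) = \sum_i p i * aa E i.
Proof. by rewrite choi_lin pred_val_lin. Qed.

Lemma aa_01 (E : MM) i : channel_test E -> 0 <= aa E i <= 1.
Proof. by move=> hE; apply: a_bounds => //; apply: unitary_pauli. Qed.

Lemma conv01 (q a : I -> R) : (forall i, 0 <= q i) -> \sum_i q i = 1 ->
  (forall i, 0 <= a i <= 1) -> 0 <= \sum_i q i * a i <= 1.
Proof.
move=> hq hs ha; apply/andP; split.
  by apply: sumr_ge0 => i _; apply: mulr_ge0 => //; case/andP: (ha i).
rewrite -hs; apply: ler_sum => i _; rewrite -[X in _ <= X]mulr1.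
by apply: ler_wpM2l => //; case/andP: (ha i).
Qed.

Lemma lin_comb (q p a : I -> R) (s : R) : L != 0 -> \sum_i q i = 1 -> \sum_i p i = 1 ->
  2 * L * (\sum_i q i * ((s * a i + L) / (2 * L)) - \sum_i p i * ((s * a i + L) / (2 * L)))
  = s * (\sum_i q i * a i - \sum_i p i * a i).
Proof.
move=> hL hq hp.
have e : forall r : I -> R, \sum_i r i = 1 ->
    \sum_i r i * ((s * a i + L) / (2 * L)) = (s * \sum_i r i * a i + L) / (2 * L).
  move=> r hr.
  have -> : \sum_i r i * ((s * a i + L) / (2 * L)) =
      \sum_i ((s * (r i * a i) + L * r i) / (2 * L)).
    by apply: eq_bigr => i _; field; rewrite hL.
  by rewrite -mulr_suml big_split /= -!mulr_sumr hr mulr1.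
by rewrite !e //; field; rewrite hL.
Qed.

Lemma past_S (E : nat -> MM) (b : nat -> R) t :
  past E b t.+1 = past E b t ++ [:: (E t, b t)].
Proof. by rewrite /past -[t.+1]addn1 iotaD map_cat. Qed.

End Strat.

Section Main.
Variables (R : rcfType) (n : nat) (ell : R -> R) (L lam del : R).
Hypothesis hconv : convex_on_pm1 ell.
Hypothesis hlip : lipschitz_on_pm1 L ell.
Local Notation I := (n.-tuple bool * n.-tuple bool)%type.
Local Notation MM := 'M[R[i]]_(2 ^ n * 2 ^ n).

Lemma regret_mw (T m r : nat) (E : nat -> MM) (b : nat -> R) (p : {ffun I -> R}) :
  0 < L -> 0 < lam <= 1/4 -> 0 < del <= 1 -> (4 <= m)%N ->
  (#|{: I}|%:R : R) * (1 - m%:R^-1) ^+ r <= 1 ->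
  (forall t, (t < T)%N -> channel_test (E t)) ->
  (forall t, (t < T)%N -> 0 <= b t <= 1) -> prob_vec p ->
  m%:R * lam * (\sum_(t < T) ell (pred_val (E t) (strat_mw ell L lam del (past E b t)) - b t)
     - \sum_(t < T) ell (pred_val (E t) (choi (pauli_channel p)) - b t) - 2 * L * del * T%:R)
  <= 2 * L * (m%:R * lam ^+ 2 * T%:R + 2 * T%:R + r%:R).
Proof.
move=> L0 /andP[l0 l1] hd m4 hN hE hb [hp0 hp1].
have hlam : 0 <= lam <= 1/4 by rewrite l1 ltW.
set g := fun t i => gg ell L del (E t) (b t) (wts ell L lam del (past E b t)) i.
have wts_eq : forall t, wts ell L lam del (past E b t) = [ffun i => wt lam g t i].
  elim=> [|t IH]; first by apply/ffunP => i; rewrite !ffunE.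
  rewrite past_S /wts foldl_cat -/(wts ell L lam del (past E b t)) /=.
  apply/ffunP => i; rewrite !ffunE /=.
  congr (_ * (1 - lam * _)); first by rewrite IH ffunE.
have hg : forall t, (t < T)%N -> forall i, 0 <= g t i <= 1.
  by move=> t _ i; apply: clamp_01.
have round : forall t, (t < T)%N ->
    ell (pred_val (E t) (strat_mw ell L lam del (past E b t)) - b t)
    - ell (pred_val (E t) (choi (pauli_channel p)) - b t)
    <= 2 * L * (mwl lam g t - \sum_i p i * g t i) + 2 * L * del.
  move=> t ht.
  set w := wts ell L lam del (past E b t).
  set q := nrm w.
  have hq : prob_vec q by apply: nrm_prob => i; apply: wts_pos.
  have hqv : forall i, q i = qv lam g t i.
    by move=> i; rewrite /q /w /qv /Wt wts_eq !ffunE; under eq_bigr do rewrite ffunE.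
  have ha := fun i => aa_01 i (hE t ht).
  have [hb0 hb1] : 0 <= b t /\ b t <= 1 by apply/andP; apply: hb.
  rewrite /strat_mw !pv_lin -/w -/q.
  set a := aa (E t).
  set x := \sum_i q i * a i - b t.
  set y := \sum_i p i * a i - b t.
  have hx : -1 <= x <= 1.
    have := conv01 (proj1 hq) (proj2 hq) ha; rewrite /x; move=> /andP[? ?].
    apply/andP; split; lra.
  have hy : -1 <= y <= 1.
    have := conv01 hp0 hp1 ha; rewrite /y; move=> /andP[? ?].
    apply/andP; split; lra.
  set s := slope ell del x.
  have hs : `|s| <= L by apply: slope_bound.
  have hgi : forall i, g t i = (s * a i + L) / (2 * L).
    move=> i; rewrite /g /gg -/w -/q -/a -/x -/s; apply: clamp_id.
    have : `|s * a i| <= L.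
      rewrite normrM; case/andP: (ha i) => a0 a1.
      rewrite (ger0_norm a0); apply: le_trans hs.
      by rewrite -[X in _ <= X]mulr1; apply: ler_wpM2l.
    rewrite ler_norml => /andP[h1 h2].
    apply/andP; split.
      by apply: divr_ge0; lra.
    by rewrite ler_pdivrMr; lra.
  have hlt : mwl lam g t = \sum_i q i * ((s * a i + L) / (2 * L)).
    by rewrite /mwl; apply: eq_bigr => i _; rewrite hqv hgi.
  have hpg : \sum_i p i * g t i = \sum_i p i * ((s * a i + L) / (2 * L)).
    by apply: eq_bigr => i _; rewrite hgi.
  rewrite hlt hpg lin_comb ?gt_eqF ?(proj2 hq) //.
  have := subgrad hconv hlip hd hx hy.
  have -> : x - y = \sum_i q i * a i - \sum_i p i * a i by rewrite /x /y; ring.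
  by [].
have hsum : \sum_(t < T) ell (pred_val (E t) (strat_mw ell L lam del (past E b t)) - b t)
     - \sum_(t < T) ell (pred_val (E t) (choi (pauli_channel p)) - b t)
     <= 2 * L * (\sum_(t < T) mwl lam g t - \sum_(t < T) \sum_i p i * g t i)
        + 2 * L * del * T%:R.
  rewrite -sumrB.
  apply: le_trans.
    by apply: ler_sum => t _; exact: (round t (ltn_ord t)).
  rewrite big_split /= -sumrB -mulr_sumr sumr_const card_ord.
  by rewrite -[X in _ + X <= _]mulr_natr.
have hmw : forall i, m%:R * lam * \sum_(t < T) mwl lam g t <=
  m%:R * lam * \sum_(t < T) g t i + m%:R * lam ^+ 2 * T%:R + 2 * T%:R + r%:R.
  by move=> i; apply: (mw_regret hlam hg (i0 n) i m4 hN).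
have hcomb : m%:R * lam * \sum_(t < T) mwl lam g t <=
  m%:R * lam * (\sum_(t < T) \sum_i p i * g t i)
  + (m%:R * lam ^+ 2 * T%:R + 2 * T%:R + r%:R).
  have -> : \sum_(t < T) \sum_i p i * g t i = \sum_i \sum_(t < T) p i * g t i by rewrite exchange_big.
  have -> : m%:R * lam * \sum_(t < T) mwl lam g t =
     \sum_i p i * (m%:R * lam * \sum_(t < T) mwl lam g t).
    by rewrite -mulr_suml hp1 mul1r.
  have -> : m%:R * lam * (\sum_i \sum_(t < T) p i * g t i) +
      (m%:R * lam ^+ 2 * T%:R + 2 * T%:R + r%:R) =
     \sum_i p i * (m%:R * lam * \sum_(t < T) g t i
       + (m%:R * lam ^+ 2 * T%:R + 2 * T%:R + r%:R)).
    rewrite -[X in _ + X](mul1r) -hp1 mulr_suml mulr_sumr -big_split /=.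
    apply: eq_bigr => i _; rewrite -mulr_sumr; ring.
  apply: ler_sum => i _; apply: ler_wpM2l; first exact: hp0.
  have := hmw i; lra.
have hm0 : 0 <= m%:R * lam by apply: mulr_ge0; [apply: ler0n | apply: ltW].
set Reg := (X in m%:R * lam * (X - _) <= _).
have : m%:R * lam * (Reg - 2 * L * del * T%:R) <=
       m%:R * lam * (2 * L * (\sum_(t < T) mwl lam g t - \sum_(t < T) \sum_i p i * g t i)).
  apply: ler_wpM2l => //; rewrite /Reg; lra.
move=> h; apply: le_trans h _.
have -> : m%:R * lam * (2 * L * (\sum_(t < T) mwl lam g t - \sum_(t < T) \sum_i p i * g t i))
  = 2 * L * (m%:R * lam * \sum_(t < T) mwl lam g t
     - m%:R * lam * \sum_(t < T) \sum_i p i * g t i) by ring.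
apply: ler_wpM2l; first by lra.
lra.
Qed.

End Main.

Local Close Scope ring_scope.

Lemma last_true (P : nat -> bool) B : P 0 -> ~~ P B -> exists k, P k /\ ~~ P k.+1.
Proof.
elim: B => [|B IH] h0 hB; first by rewrite h0 in hB.
case hb: (P B); first by exists B; split.
by apply: IH => //; rewrite hb.
Qed.

Lemma m0_ex n T : (0 < n)%N -> exists m0, (n * m0 ^ 2 <= T ^ 3 < n * m0.+1 ^ 2)%N.
Proof.
move=> n0.
have [k [h1 h2]] := @last_true (fun k => n * k ^ 2 <= T ^ 3)%N (T ^ 3).+1 ltac:(by rewrite /= expnS mul0n muln0) ltac:(by rewrite /= -ltnNge; nia).
by exists k; rewrite h1 /= ltnNge.
Qed.

Lemma m0_big n T m0 : (0 < n)%N -> (16 * n < T)%N -> (T ^ 3 < n * m0.+1 ^ 2)%N -> (4 * T <= m0)%N.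
Proof.
move=> n0 hT h; rewrite leqNgt; apply/negP => hm.
have h1 : (m0.+1 ^ 2 <= (4 * T) ^ 2)%N by rewrite leq_exp2r.
have h2 : (n * m0.+1 ^ 2 <= n * (4 * T) ^ 2)%N by rewrite leq_mul2l h1 orbT.
have T0 : (0 < T)%N by apply: leq_ltn_trans hT.
have h3 : (n * (4 * T) ^ 2 < T ^ 3)%N.
  have -> : (n * (4 * T) ^ 2 = (16 * n) * T ^ 2)%N by rewrite expnMn; lia.
  have -> : (T ^ 3 = T * T ^ 2)%N by rewrite expnS.
  by rewrite ltn_mul2r expn_gt0 T0.
have := leq_ltn_trans h2 h3; rewrite ltnNge ltnW //.
Qed.

Lemma m0_up n T m0 : (1 <= m0)%N -> (T ^ 3 < n * m0.+1 ^ 2)%N -> (T ^ 3 <= 4 * n * m0 ^ 2)%N.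
Proof. move=> h1 h; nia. Qed.

Local Open Scope ring_scope.


Section Fin.
Variables (R : rcfType).

Lemma le_sqrt (x y : R) : 0 <= x -> x ^+ 2 <= y -> x <= Num.sqrt y.
Proof.
move=> x0 h; rewrite -(ger0_norm x0) -sqrtr_sqr; exact: ler_wsqrtr.
Qed.

Lemma sq_le (a b : R) : 0 <= a -> 0 <= b -> a * a <= b * b -> a <= b.
Proof. move=> a0 b0 h; nra. Qed.

Lemma sum_I0 (q a : (0.-tuple bool * 0.-tuple bool) -> R) :
  \sum_i q i = 1 -> \sum_i q i * a i = a (i0 0).
Proof.
have eq0 : forall j : (0.-tuple bool * 0.-tuple bool), j = i0 0.
  by case=> x y; rewrite /i0 (tuple0 x) (tuple0 y) (tuple0 [tuple of nseq 0 false]).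
have s1 : forall F : (0.-tuple bool * 0.-tuple bool) -> R, \sum_i F i = F (i0 0).
  move=> F; rewrite (bigD1 (i0 0)) //= big1 ?addr0 // => j.
  by rewrite (eq0 j) eqxx.
by rewrite !s1 => ->; rewrite mul1r.
Qed.

Variables (n : nat) (ell : R -> R) (L lam del : R).
Hypothesis hconv : convex_on_pm1 ell.
Hypothesis hlip : lipschitz_on_pm1 L ell.
Hypothesis hlam : 0 <= lam <= 1/4.
Local Notation I := (n.-tuple bool * n.-tuple bool)%type.
Local Notation MM := 'M[R[i]]_(2 ^ n * 2 ^ n).

Lemma pred_bounds (E : MM) (h : history R n) (p : {ffun I -> R}) :
  channel_test E -> prob_vec p ->
  0 <= pred_val E (strat_mw ell L lam del h) <= 1 /\
  0 <= pred_val E (choi (pauli_channel p)) <= 1.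
Proof.
move=> hE [hp0 hp1]; rewrite /strat_mw !pv_lin; split.
  have [hq0 hq1] := nrm_prob (fun i => wts_pos ell L del hlam h i).
  by apply: conv01 => // i; apply: aa_01.
by apply: conv01 => // i; apply: aa_01.
Qed.

Lemma round_triv (u v bb : R) : 0 <= u <= 1 -> 0 <= v <= 1 -> 0 <= bb <= 1 ->
  ell (u - bb) - ell (v - bb) <= L * `|u - v| /\ L * `|u - v| <= L.
Proof.
move=> /andP[u0 u1] /andP[v0 v1] /andP[b0 b1].
have L0 := L_ge0 hlip.
split.
  have := hlip (x:=u - bb) (y:=v - bb).
  have -> : u - bb - (v - bb) = u - v by ring.
  move=> /(_ _ _) h.
  have {h} h := h ltac:(apply/andP; split; lra) ltac:(apply/andP; split; lra).
  by apply: le_trans h; apply: ler_norm.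
rewrite -[X in _ <= X]mulr1; apply: ler_wpM2l => //.
rewrite ler_norml; apply/andP; split; lra.
Qed.

Lemma regret_triv (T : nat) (E : nat -> MM) (b : nat -> R) (p : {ffun I -> R}) :
  (forall t, (t < T)%N -> channel_test (E t)) ->
  (forall t, (t < T)%N -> 0 <= b t <= 1) -> prob_vec p ->
  \sum_(t < T) ell (pred_val (E t) (strat_mw ell L lam del (past E b t)) - b t)
  - \sum_(t < T) ell (pred_val (E t) (choi (pauli_channel p)) - b t)
  <= \sum_(t < T) L * `|pred_val (E t) (strat_mw ell L lam del (past E b t))
                     - pred_val (E t) (choi (pauli_channel p))|.
Proof.
move=> hE hb hp; rewrite -sumrB; apply: ler_sum => t _.
have [h1 h2] := pred_bounds (past E b t) (hE t (ltn_ord t)) hp.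
by have [] := round_triv h1 h2 (hb t (ltn_ord t)).
Qed.

End Fin.


Theorem theorem3p5 :
  exists c : nat,
  forall (R : rcfType) (n : nat) (L : R) (ell : R -> R),
    convex_on_pm1 ell -> lipschitz_on_pm1 L ell ->
  forall T : nat,
  exists strat : strategy R n,
    (forall h : history R n, in_PAULI' (strat h)) /\
    forall (E : nat -> 'M[R[i]]_(2 ^ n * 2 ^ n)) (b : nat -> R),
      (forall t, (t < T)%N -> channel_test (E t)) ->
      (forall t, (t < T)%N -> 0 <= b t <= 1) ->
    forall p : {ffun (n.-tuple bool * n.-tuple bool) -> R}, prob_vec p ->
      \sum_(t < T) ell (pred_val (E t) (strat (past E b t)) - b t)
      - \sum_(t < T) ell (pred_val (E t) (choi (pauli_channel p)) - b t)
      <= c%:R * L * Num.sqrt ((n * T)%:R).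
Proof.
exists 12%N => R n L ell hconv hlip T.
have L0 := L_ge0 hlip.
have S0 : 0 <= Num.sqrt ((n * T)%:R : R) by apply: sqrtr_ge0.
have [/and3P[n0 hT Lp] | hcase] := boolP [&& (0 < n)%N, (16 * n < T)%N & 0 < L].
  have [m0 /andP[hm1 hm2]] := m0_ex T n0.
  have hm0 := m0_big n0 hT hm2.
  have T1 : (1 <= T)%N by apply: leq_ltn_trans hT.
  have m04 : (4 <= m0)%N by apply: leq_trans hm0; rewrite leq_pmulr.
  have m01 : (1 <= m0)%N by apply: leq_trans m04.
  have hup := m0_up m01 hm2.
  set Tr : R := T%:R; set Mr : R := m0%:R; set Nr : R := n%:R.
  have Tr1 : 1 <= Tr by rewrite /Tr ler1n.
  have Nr1 : 1 <= Nr by rewrite /Nr ler1n.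
  have hMT : 4 * Tr <= Mr by rewrite /Tr /Mr -(natrM R 4 T) ler_nat.
  have hup' : Tr ^+ 3 <= 4 * Nr * Mr ^+ 2.
    by rewrite /Tr /Mr /Nr -!natrX -!natrM ler_nat.
  have hlo' : Nr * Mr ^+ 2 <= Tr ^+ 3.
    by rewrite /Tr /Mr /Nr -!natrX -!natrM ler_nat.
  have Mr0 : 0 < Mr by lra.
  set lam : R := Tr / Mr.
  set del : R := Tr^-1.
  have hlam' : 0 < lam <= 1/4.
    apply/andP; split; first by rewrite /lam divr_gt0 //; lra.
    by rewrite /lam ler_pdivrMr //; lra.
  have hlam0 : 0 <= lam <= 1/4 by case/andP: hlam' => h1 h2; rewrite h2 ltW.
  have hd : 0 < del <= 1.
    apply/andP; split; first by rewrite /del invr_gt0; lra.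
    by rewrite /del invf_le1; lra.
  set m := (2 * m0)%N.
  have hm4 : (4 <= m)%N by apply: leq_trans m04 _; rewrite /m leq_pmull.
  set r := (m * (2 * n))%N.
  have hN : (#|{: (n.-tuple bool * n.-tuple bool)}|%:R : R) * (1 - m%:R^-1) ^+ r <= 1.
    rewrite card_prod card_tuple card_bool natrM natrX exprM -exprD addnn -mul2n -exprMn.
    have hb := @beta_m R m hm4.
    have hb0 : 0 <= (1 - (m%:R : R)^-1) ^+ m by apply: exprn_ge0; exact: (@beta_ge0 R m hm4).
    apply: exprn_ile1.
      by apply: mulr_ge0 => //; apply: ler0n.
    lra.
  exists (strat_mw ell L lam del); split; first by move=> h; apply: strat_pauli.
  move=> E b hE hb p hp.
  have h0 := @regret_mw R n ell L lam del hconv hlip T m r E b p Lp hlam' hd hm4 hN hE hb hp.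
  move: h0.
  set Reg := (\sum_(t < T) _ - \sum_(t < T) _).
  set S := Num.sqrt _ in S0 *.
  move=> h0.
  have hS2 : S * S = Nr * Tr by rewrite -expr2 /S sqr_sqrtr ?ler0n // natrM.
  have S1 : 1 <= S.
    have : 1 <= S * S by rewrite hS2; nra.
    nra.
  have Tr0 : 0 < Tr by lra.
  have em : (m%:R : R) = 2 * Mr by rewrite /m natrM.
  have er : (r%:R : R) = 2 * Mr * (2 * Nr) by rewrite /r /m !natrM.
  have eml : m%:R * lam = 2 * Tr by rewrite em /lam; field; rewrite gt_eqF.
  have edel : 2 * L * del * Tr = 2 * L by rewrite /del; field; rewrite gt_eqF.
  set A := Tr * Tr / Mr.
  set B := Mr * Nr / Tr.
  have eml2 : m%:R * lam ^+ 2 * Tr = 2 * A * Tr.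
    by rewrite em /lam /A; field; rewrite gt_eqF.
  have er2 : (r%:R : R) = 4 * B * Tr.
    by rewrite er /B; field; rewrite gt_eqF.
  rewrite eml edel eml2 er2 in h0.
  have h1 : 2 * Tr * (Reg - 2 * L) <= 2 * Tr * (L * (2 * A + 2 + 4 * B)).
    by apply: le_trans h0 _; rewrite le_eqVlt; apply/orP; left; apply/eqP; ring.
  rewrite ler_pM2l in h1; last by lra.
  have hA : A <= 2 * S.
    rewrite /A ler_pdivrMr //.
    apply: sq_le; first by apply: mulr_ge0; lra.
      by apply: mulr_ge0 => //; apply: mulr_ge0; lra.
    have -> : 2 * S * Mr * (2 * S * Mr) = 4 * (S * S) * (Mr * Mr) by ring.
    rewrite hS2.
    have : Tr * Tr ^+ 3 <= Tr * (4 * Nr * Mr ^+ 2) by rewrite ler_pM2l.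
    have -> : Tr * Tr ^+ 3 = Tr * Tr * (Tr * Tr) by rewrite !exprS expr0; ring.
    by have -> : Tr * (4 * Nr * Mr ^+ 2) = 4 * (Nr * Tr) * (Mr * Mr) by rewrite expr2; ring.
  have hB : B <= S.
    rewrite /B ler_pdivrMr //.
    apply: sq_le; first by apply: mulr_ge0; lra.
      by apply: mulr_ge0 => //; lra.
    have -> : S * Tr * (S * Tr) = (S * S) * (Tr * Tr) by ring.
    rewrite hS2.
    have : Nr * (Nr * Mr ^+ 2) <= Nr * Tr ^+ 3 by rewrite ler_pM2l //; lra.
    have -> : Nr * (Nr * Mr ^+ 2) = Mr * Nr * (Mr * Nr) by rewrite expr2; ring.
    by have -> : Nr * Tr ^+ 3 = Nr * Tr * (Tr * Tr) by rewrite !exprS expr0; ring.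
  have f1 : 0 <= L * (2 * S - A) by apply: mulr_ge0; lra.
  have f2 : 0 <= L * (S - B) by apply: mulr_ge0; lra.
  have f3 : 0 <= L * (S - 1) by apply: mulr_ge0; lra.
  nra.
have hl0 : 0 <= (0 : R) <= 1/4 by apply/andP; split; [exact: lexx | lra].
exists (strat_mw ell L 0 1); split; first by move=> h; apply: strat_pauli.
move=> E b hE hb p hp.
apply: le_trans (regret_triv 1 hlip hl0 hE hb hp) _.
case: (posnP n) => [n_0 | n_pos].
  subst n.
  rewrite big1; last first.
    move=> t _; rewrite /strat_mw !pv_lin.
    have [hq0 hq1] := nrm_prob (fun i => wts_pos ell L 1 hl0 (past E b t) i).
    by rewrite !sum_I0 ?(proj2 hp) // subrr normr0 mulr0.
  by rewrite mul0n sqrtr0 mulr0.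
have hTL : (T <= 16 * n)%N \/ L = 0.
  move: hcase; rewrite n_pos /= negb_and -leqNgt => /orP[h|h]; first by left.
  by right; apply/eqP; rewrite eq_le L0 andbT leNgt.
apply: le_trans (_ : \sum_(t < T) L <= _).
  apply: ler_sum => t _.
  have [h1 h2] := pred_bounds ell L 1 hl0 (past E b t) (hE t (ltn_ord t)) hp.
  have [h3 h4] := round_triv hlip h1 h2 (hb t (ltn_ord t)).
  exact: h4.
rewrite sumr_const card_ord -[L *+ T]mulr_natr.
set S := Num.sqrt _ in S0 *.
have hS2 : S ^+ 2 = (n * T)%:R by rewrite /S sqr_sqrtr // ler0n.
case: hTL => [hT | hL0]; last by rewrite hL0 !(mul0r, mulr0).
have hTS : (T%:R : R) <= 4 * S.
  apply: sq_le; first exact: ler0n.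
    by apply: mulr_ge0.
  have : (T%:R : R) * T%:R <= (16 * n)%:R * T%:R.
    by apply: ler_wpM2r; [apply: ler0n | rewrite ler_nat].
  have -> : 4 * S * (4 * S) = 16 * S ^+ 2 by rewrite expr2; ring.
  by rewrite hS2 !natrM mulrA.
nra.
Qed.
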